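(* Let $f : \widehat{\mathbb{Z}} \to \widehat{\mathbb{Z}}$ be a congruence stable map. Then $f$ is profinite preperiodic.
   Context: $\mathbb{N} = \{1,2,\dots\}$, $\widehat{\mathbb{Z}} = \varprojlim_n \mathbb{Z}/n\mathbb{Z}$ (a complete metric space with its profinite topology); $s \equiv_n t$ means $s-t \in n\widehat{\mathbb{Z}}$; $\widehat{\cdot}:\mathbb{N}\to\widehat{\mathbb{Z}}$ is the natural embedding. For a continuous map $f:\widehat{\mathbb{Z}}\to\widehat{\mathbb{Z}}$, a map $P:\mathbb{N}\to\mathbb{N}$ is a period map of $f$ if $s \equiv_{P(n)} t$ implies $f(s) \equiv_n f(t)$ for all $s,t \in \widehat{\mathbb{Z}}$, $n \in \mathbb{N}$. A continuous $f$ is congruence stable if there exists a period map $P$ of $f$ such that for each $n \in \mathbb{N}$, $P^k(n) = P^{k+1}(n)$ for all sufficiently large $k$. A continuous map $f$ is profinite preperiodic if for every $x \in \widehat{\mathbb{Z}}$ the following holds: for every $s \in \widehat{\mathbb{Z}}$ and every sequence of positive integers $(n_i)$ with $n_i \to +\infty$ in $\mathbb{R}$ and $\widehat{n_i} \to s$ in $\widehat{\mathbb{Z}}$, the limit $\lim_{i\to\infty} f^{n_i}(x)$ exists in $\widehat{\mathbb{Z}}$ and depends only on $s$. (Equivalently, each map $n \mapsto f^n(x)$ extends continuously to the profinite completion $\widehat{\mathbb{N}} = \mathbb{N} \sqcup \widehat{\mathbb{Z}}$ of $(\mathbb{N},+)$.) *)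

(* Defs.v *)
From mathcomp Require Import all_boot.
Set Implicit Arguments. Unset Strict Implicit. Unset Printing Implicit Defensive.

(* The profinite integers  Zhat = lim_n Z/nZ, represented as compatible
   families of residues: zval x n in [0,n) for n >= 1 (the image of x in
   Z/nZ), with zval x n = zval x m mod m whenever m | n.  Index 0 is unused
   and normalized to 0 so that Leibniz equality is the right equality. *)
Record Zhat := MkZhat {
  zval : nat -> nat ;
  zval0 : zval 0 = 0 ;
  zval_lt : forall n, 0 < n -> zval n < n ;
  zval_compat : forall m n, 0 < m -> 0 < n -> m %| n -> zval n %% m = zval m
}.

(* s ==_n t  iff  s - t \in n Zhat, i.e. s and t have the same image in
   Z/nZ (n Zhat is the kernel of the projection Zhat -> Z/nZ). *)
Definition zcongr (n : nat) (s t : Zhat) : Prop := zval s n = zval t n.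

Definition nat_fam (n : nat) (k : nat) : nat := if k == 0 then 0 else n %% k.

Lemma nat_fam0 n : nat_fam n 0 = 0. Proof. by []. Qed.

Lemma nat_fam_lt n k : 0 < k -> nat_fam n k < k.
Proof. rewrite /nat_fam; case: k => // k _; exact: ltn_pmod. Qed.

Lemma nat_fam_compat n m k : 0 < m -> 0 < k -> m %| k -> nat_fam n k %% m = nat_fam n m.
Proof.
rewrite /nat_fam; case: m => // m; case: k => // k _ _ H /=.
exact: modn_dvdm.
Qed.

Definition zhat_of_nat (n : nat) : Zhat :=
  MkZhat (nat_fam0 n) (@nat_fam_lt n) (@nat_fam_compat n).

(* Continuity for the profinite topology (basic neighbourhoods of s are
   the cosets s + m Zhat, m >= 1). *)
Definition zcontinuous (f : Zhat -> Zhat) : Prop :=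
  forall (s : Zhat) (n : nat), 0 < n ->
    exists m, 0 < m /\ forall t : Zhat, zcongr m s t -> zcongr n (f s) (f t).

Definition period_map (f : Zhat -> Zhat) (P : nat -> nat) : Prop :=
  (forall n, 0 < n -> 0 < P n) /\
  (forall (n : nat) (s t : Zhat), 0 < n -> zcongr (P n) s t -> zcongr n (f s) (f t)).

Definition congruence_stable (f : Zhat -> Zhat) : Prop :=
  zcontinuous f /\
  exists P : nat -> nat, period_map f P /\
    forall n, 0 < n -> exists K, forall k, K <= k -> iter k P n = iter k.+1 P n.

Definition zconv (u : nat -> Zhat) (l : Zhat) : Prop :=
  forall k, 0 < k -> exists I, forall i, I <= i -> zcongr k (u i) l.

Definition profinite_preperiodic (f : Zhat -> Zhat) : Prop :=
  zcontinuous f /\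
  forall x : Zhat, exists L : Zhat -> Zhat,
    forall (s : Zhat) (n : nat -> nat),
      (forall i, 0 < n i) ->
      (forall M, exists I, forall i, I <= i -> M <= n i) ->
      zconv (fun i => zhat_of_nat (n i)) s ->
      zconv (fun i => iter (n i) f x) (L s).

(* Main.v *)
From Stdlib Require Import ClassicalEpsilon.
Require Import Defs.
From mathcomp Require Import all_boot.
From mathcomp Require Import zify.
Set Implicit Arguments. Unset Strict Implicit.

Lemma iterP_pos f P K k : period_map f P -> 0 < k -> 0 < iter K P k.
Proof. move=> HP kp; elim: K => //= K IH; exact: HP.1 _ IH. Qed.

Lemma iter_level f P K k s t : period_map f P -> 0 < k ->
  zcongr (iter K P k) s t -> zcongr k (iter K f s) (iter K f t).
Proof.
move=> HP; elim: K k => [//|K IH] k kp H.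
rewrite iterSr in H.
rewrite !iterS. apply: HP.2 => //. apply: IH => //. exact: HP.1.
Qed.

Lemma iter_fix f P m s t r : period_map f P -> 0 < m -> P m = m ->
  zcongr m s t -> zcongr m (iter r f s) (iter r f t).
Proof.
move=> HP mp Pm H; elim: r => //= r IH. apply: HP.2 => //. by rewrite Pm.
Qed.

Lemma ev_period f P x k K : period_map f P -> 0 < k -> P (iter K P k) = iter K P k ->
  exists T Q, 0 < Q /\ forall j, T <= j -> zcongr k (iter (j + Q) f x) (iter j f x).
Proof.
move=> HP kp Pm.
have mp : 0 < iter K P k by exact: (iterP_pos (f:=f) K HP kp).
have key : forall i j : nat, i < j ->
   zval (iter (K+i) f x) (iter K P k) = zval (iter (K+j) f x) (iter K P k) ->
   exists T Q, 0 < Q /\ forall j, T <= j -> zcongr k (iter (j + Q) f x) (iter j f x).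
  move=> i j ij Ez; exists (K+K+i), (j - i); split; first lia.
  move=> jj Hjj; have [r ->] : exists r, jj = K+K+i + r by exists (jj - (K+K+i)); lia.
  have H1 := iter_fix r HP mp Pm (esym Ez).
  have H2 := iter_level HP kp H1.
  rewrite -!iterD in H2.
  have -> : K + K + i + r + (j - i) = K + (r + (K + j)) by lia.
  have -> : K + K + i + r = K + (r + (K + i)) by lia.
  by move: H2; rewrite !addnA.
pose g (i : 'I_(iter K P k).+1) : 'I_(iter K P k) :=
  Ordinal (zval_lt (iter (K + i) f x) mp).
have : ~~ injectiveb g.
  apply/negP => /injectiveP inj. have := @leq_card _ _ g inj. by rewrite !card_ord ltnn.
case/injectivePn => i [j] ij gij.
have Ez : zval (iter (K+i) f x) (iter K P k) = zval (iter (K+j) f x) (iter K P k).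
  exact: (congr1 val gij).
case: (ltngtP i j) => h.
- exact: key h Ez.
- exact: key h (esym Ez).
- by move: ij; rewrite (val_inj h) eqxx.
Qed.

Lemma period_mod f x k T Q : 0 < Q ->
  (forall j, T <= j -> zcongr k (iter (j + Q) f x) (iter j f x)) ->
  forall j1 j2, T <= j1 -> T <= j2 -> j1 %% Q = j2 %% Q ->
  zcongr k (iter j1 f x) (iter j2 f x).
Proof.
move=> Qp H.
have step c j : T <= j -> zcongr k (iter (j + c * Q) f x) (iter j f x).
  move=> Tj; elim: c => [|c IH]; first by rewrite mul0n addn0.
  rewrite mulSnr addnA /zcongr H; last lia.
  exact: IH.
move=> j1 j2.
wlog le12 : j1 j2 / j1 <= j2.
  move=> W H1 H2 E; case: (leqP j1 j2) => h; first exact: W.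
  by symmetry; apply: W; rewrite ?E //; apply: ltnW.
move=> H1 H2 E.
have := eqn_mod_dvd Q le12; rewrite E eqxx => /esym /dvdnP [c hc].
have -> : j2 = j1 + c * Q by lia.
symmetry; exact: step.
Qed.

Theorem theorem3p7 (f : Zhat -> Zhat) :
  congruence_stable f -> profinite_preperiodic f.
Proof.
case=> cont [P [HP Hst]]; split => // x.
have H : forall k, exists p : nat * nat, 0 < k -> 0 < p.2 /\
    forall j, p.1 <= j -> zcongr k (iter (j + p.2) f x) (iter j f x).
  move=> k; case: (posnP k) => [->|kp]; first by exists (0,0).
  have [K HK] := Hst k kp.
  have := HK K (leqnn K). rewrite iterS => /esym Pm.
  have [T [Q [Qp HTQ]]] := ev_period x HP kp Pm.
  by exists (T,Q).
pose TQ k := proj1_sig (constructive_indefinite_description _ (H k)).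
have HTQ k : 0 < k -> 0 < (TQ k).2 /\
    forall j, (TQ k).1 <= j -> zcongr k (iter (j + (TQ k).2) f x) (iter j f x).
  exact: (proj2_sig (constructive_indefinite_description _ (H k))).
pose T k := (TQ k).1. pose Q k := (TQ k).2.
have A k j1 j2 : 0 < k -> T k <= j1 -> T k <= j2 -> j1 %% Q k = j2 %% Q k ->
    zcongr k (iter j1 f x) (iter j2 f x).
  move=> kp; have [Qp HT] := HTQ k kp; exact: period_mod Qp HT j1 j2.
pose jsel k s := T k * Q k + zval s (Q k).
have jselT k s : 0 < k -> T k <= jsel k s.
  move=> kp; have [Qp _] := HTQ k kp; rewrite /jsel; fold (Q k) in Qp; nia.
have jselQ k s : 0 < k -> jsel k s %% Q k = zval s (Q k).
  move=> kp; have [Qp _] := HTQ k kp; fold (Q k) in Qp.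
  by rewrite /jsel modnMDl modn_small // zval_lt.
pose Lf s k := zval (iter (jsel k s) f x) k.
have compat : forall s m n, 0 < m -> 0 < n -> m %| n -> Lf s n %% m = Lf s m.
  move=> s m n mp np mn.
  have [Qmp _] := HTQ m mp; have [Qnp _] := HTQ n np.
  fold (Q m) in Qmp; fold (Q n) in Qnp.
  pose J := (T n + T m) * (Q n * Q m) + zval s (Q n * Q m).
  have QQ : 0 < Q n * Q m by rewrite muln_gt0 Qmp Qnp.
  have Jn : J %% Q n = zval s (Q n).
    rewrite /J (mulnC (Q n)) mulnA modnMDl zval_compat // ?muln_gt0 ?Qmp ?Qnp //; by first [apply: dvdn_mull | apply: dvdn_mulr].
  have Jm : J %% Q m = zval s (Q m).
    rewrite /J mulnA modnMDl zval_compat // ?muln_gt0 ?Qmp ?Qnp //; by first [apply: dvdn_mull | apply: dvdn_mulr].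
  have JTn : T n <= J by rewrite /J; nia.
  have JTm : T m <= J by rewrite /J; nia.
  rewrite /Lf.
  have -> : zval (iter (jsel n s) f x) n = zval (iter J f x) n.
    apply: A => //; [exact: jselT | by rewrite jselQ].
  rewrite zval_compat //.
  apply: A => //; [exact: jselT | by rewrite jselQ].
pose L s := @MkZhat (Lf s) (zval0 _) (fun n np => zval_lt _ np) (compat s).
exists L => s n hpos hdiv hconv k kp.
have [Qp _] := HTQ k kp; fold (Q k) in Qp.
have [I1 h1] := hconv (Q k) Qp.
have [I2 h2] := hdiv (T k).
exists (maxn I1 I2) => i; rewrite geq_max => /andP [i1 i2].
rewrite /zcongr /= /Lf.
apply: A => //; [exact: h2 | exact: jselT |].
rewrite jselQ //.
move: (h1 i i1); rewrite /zcongr /= /nat_fam.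
have /negbTE -> : Q k != 0 by rewrite -lt0n.
done.
Qed.
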